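(* Let $(I_t)_{t\in\mathbb{Z}}$ be a stochastic process such that there exists a family $(I_t^n)_{t\in\mathbb{Z}}$, $n\in\mathbb{N}$, of $\{0,1\}$-valued stationary stochastic processes with $P(I_0^n=1)>0$ for all $n$ and $$\mathcal{L}\bigl((I_t^n)_{t\in\{-u,\dots,v\}}\mid I_0^n=1\bigr)\Longrightarrow \mathcal{L}\bigl((I_t)_{t\in\{-u,\dots,v\}}\bigr)\quad (n\to\infty)$$ for all $u,v\in\mathbb{N}$. Let $C=\{t\in\mathbb{Z}: I_t=1\}$. (a) Let $A\subset\mathbb{Z}$ with $0\in A$. Then $P(C=A)=P(C=A-a)$ for all $a\in A$, where $A-a:=\{t\in\mathbb{Z}: a+t\in A\}$. (b) Let $A\subset\mathbb{Z}$ with $0\in A$ and let $t_1,t_2\in\mathbb{Z}$ with $t_1\le 0\le t_2$. Then $$P\bigl(C\cap[t_1,t_2]=A\cap[t_1,t_2]\bigr)=P\bigl(C\cap[t_1-a,t_2-a]=(A-a)\cap[t_1-a,t_2-a]\bigr)$$ for all $a\in A\cap[t_1,t_2]$.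
   Context: $\mathcal{L}(\cdot\mid\cdot)$ denotes conditional law and $\Longrightarrow$ convergence in distribution. Intervals $[t_1,t_2]$ are understood as subsets of $\mathbb{Z}$. *)

(* Defs.v *)
From HB Require Import structures.
From mathcomp Require Import all_boot all_order all_algebra.
From mathcomp Require Import all_classical all_reals all_analysis.
Set Implicit Arguments. Unset Strict Implicit. Unset Printing Implicit Defensive.
Import Order.TTheory GRing.Theory Num.Theory.
Import numFieldNormedType.Exports.
Local Open Scope classical_set_scope.
Local Open Scope ring_scope.

(* Window vector (X_t)_{t in {-u,...,v}} as a row vector of length u+v+1;
   entry i corresponds to time i - u. *)
Definition window (R : realType) (T : Type) (X : int -> T -> R) (u v : nat)
  (w : T) : 'rV[R]_(u + v).+1 :=
  \row_(i < (u + v).+1) X (i%:Z - u%:Z) w.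

(* For a {0,1}-valued process the
   finite-dimensional law is determined by the probabilities of the
   events {X_{t_1} = b_1, ..., X_{t_k} = b_k}. *)
Definition stationary01 (R : realType) d (T : measurableType d)
  (P : probability T R) (X : int -> T -> bool) : Prop :=
  forall (s : int) (tb : seq (int * bool)),
    P [set w | all (fun p => X (p.1 + s) w == p.2) tb]
    = P [set w | all (fun p => X p.1 w == p.2) tb].

Definition bounded_continuous (R : realType) (k : nat) (g : 'rV[R]_k -> R)
  : Prop := continuous g /\ exists M : R, forall x, `|g x| <= M.

(* Convergence in distribution of the conditional laws
   L((X^n_t)_{t in [-u,v]} | X^n_0 = 1) to L((Y_t)_{t in [-u,v]}), expressed via
   bounded continuous test functions; the conditional expectation given an
   event B of positive probability is E[g(.) 1_B] / P(B). *)
Definition cond_fidi_cvg (R : realType)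
  (dn : nat -> measure_display) (Tn : forall n, measurableType (dn n))
  (Pn : forall n, probability (Tn n) R) (Xn : forall n, int -> Tn n -> bool)
  d (T : measurableType d) (P : probability T R) (Y : int -> T -> R) : Prop :=
  forall (u v : nat) (g : 'rV[R]_(u + v).+1 -> R), bounded_continuous g ->
    (fun n => Rintegral (Pn n) [set w | Xn n 0 w]
                 (fun w => g (window (fun t w => (Xn n t w)%:R) u v w))
              / fine (Pn n [set w | Xn n 0 w]))
      @ \oo --> Rintegral P setT (fun w => g (window Y u v w)).

Definition Cset (R : realType) (T : Type) (Y : int -> T -> R) (w : T) : set int :=
  [set t | Y t w = 1].

Definition shiftset (A : set int) (a : int) : set int := [set t | A (a + t)].

Definition zint (t1 t2 : int) : set int := [set t | t1 <= t <= t2].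

(* Main.v *)
Set Warnings "-notation-overridden,-ambiguous-paths,-notation-incompatible-prefix,-deprecated".
Require Import Defs.
From HB Require Import structures.
From mathcomp Require Import all_boot all_order all_algebra.
From mathcomp Require Import all_classical all_reals all_analysis.
From mathcomp Require Import measurable_realfun.
Set Implicit Arguments. Unset Strict Implicit. Unset Printing Implicit Defensive.
Import Order.TTheory GRing.Theory Num.Theory.
Import numFieldNormedType.Exports.
Local Open Scope classical_set_scope.
Local Open Scope ring_scope.

Definition cl (R : realType) (y : R) : R := Num.min 1 `|y|.
Definition hb (R : realType) (b : bool) (y : R) : R := if b then cl y else 1 - cl y.
Definition phi (R : realType) (y : R) : R := Num.min 1 `|y * (y - 1)|.

Lemma cl_cont (R : realType) : continuous (@cl R).
Proof.
move=> x; apply: (@continuous_min R R (cst 1) (@Num.Def.normr R R)).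
  exact: cst_continuous.
exact: norm_continuous.
Qed.

Lemma hb_cont (R : realType) b : continuous (@hb R b).
Proof.
case: b => x /=; first exact: cl_cont.
apply: (@continuousB R R^o R (cst 1) (@cl R)); first exact: cst_continuous.
exact: cl_cont.
Qed.

Lemma phi_cont (R : realType) : continuous (@phi R).
Proof.
move=> x; apply: (@continuous_min R R (cst 1) (fun y => `|y * (y - 1)|)).
  exact: cst_continuous.
apply: (continuous_comp (f := fun y : R => y * (y - 1))); last exact: norm_continuous.
apply: cvgM; first exact: cvg_id.
by apply: cvgB; [exact: cvg_id | exact: cvg_cst].
Qed.

Lemma cl_01 (R : realType) (y : R) : 0 <= cl y <= 1.
Proof. by rewrite /cl le_min ler01 normr_ge0 ge_min lexx. Qed.

Lemma hb_01 (R : realType) b (y : R) : 0 <= hb b y <= 1.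
Proof.
case: b => /=; first exact: cl_01.
have /andP[h0 h1] := cl_01 y.
by rewrite subr_ge0 h1 /= lerBlDr lerDl.
Qed.

Lemma phi_01 (R : realType) (y : R) : 0 <= phi y <= 1.
Proof. by rewrite /phi le_min ler01 normr_ge0 ge_min lexx. Qed.

Lemma hb_bool (R : realType) b (x : bool) : hb b (x%:R : R) = (x == b)%:R.
Proof.
have m1 : Num.min 1 (1 : R) = 1 by rewrite minxx.
have m0 : Num.min 1 (0 : R) = 0 by rewrite (min_r (@ler01 R)).
by case: b; case: x; rewrite /hb /cl /= ?normr1 ?normr0 ?m1 ?m0 ?subrr ?subr0.
Qed.

Lemma phi_bool (R : realType) (x : bool) : phi (x%:R : R) = 0.
Proof.
by case: x; rewrite /phi /= ?subrr ?mulr0 ?mul0r normr0 (min_r (@ler01 R)).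
Qed.

Lemma phi0 (R : realType) (y : R) : phi y = 0 -> y = 0 \/ y = 1.
Proof.
rewrite /phi => /eqP; rewrite eq_le => /andP[h _].
move: h; rewrite ge_min ler10 /= normr_le0 mulf_eq0 subr_eq0 => /orP[/eqP|/eqP]; by [left|right].
Qed.

Lemma cont_prod (R : realType) (Tp : topologicalType) (J : Type) (s : seq J)
  (F : J -> Tp -> R) : (forall j, continuous (F j)) ->
  continuous (fun x => \prod_(j <- s) F j x).
Proof.
move=> cF; elim: s => [|j s IH] x.
  under eq_fun do rewrite big_nil; exact: cst_continuous.
under eq_fun do rewrite big_cons.
by apply: cvgM; [exact: cF | exact: IH].
Qed.

Lemma cont_sum (R : realType) (Tp : topologicalType) (J : Type) (s : seq J)
  (F : J -> Tp -> R) : (forall j, continuous (F j)) ->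
  continuous (fun x => \sum_(j <- s) F j x).
Proof.
move=> cF; elim: s => [|j s IH] x.
  under eq_fun do rewrite big_nil; exact: cst_continuous.
under eq_fun do rewrite big_cons.
by apply: cvgD; [exact: cF | exact: IH].
Qed.

Definition Gf (R : realType) (u v : nat) (b : int -> bool) (x : 'rV[R]_(u + v).+1) : R :=
  \prod_(i < (u + v).+1) hb (b (i%:Z - u%:Z)) (x ord0 i).
Definition Psif (R : realType) (u v : nat) (x : 'rV[R]_(u + v).+1) : R :=
  \sum_(i < (u + v).+1) phi (x ord0 i).

Lemma Gf_bc (R : realType) u v b : bounded_continuous (@Gf R u v b).
Proof.
split.
  apply: cont_prod => i x.
  apply: (@continuous_comp _ _ _ (fun M : 'rV[R]_(u+v).+1 => M ord0 i) (hb (b (i%:Z - u%:Z))) x). exact: coord_continuous. exact: hb_cont.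
exists 1 => x; rewrite /Gf.
have /andP[h0 h1] : 0 <= \prod_(i < (u + v).+1) hb (b (i%:Z - u%:Z)) (x ord0 i) <= 1.
  apply: (big_ind (fun r : R => 0 <= r <= 1)); first by rewrite ler01 lexx.
    move=> p q /andP[p0 p1] /andP[q0 q1]; by rewrite mulr_ge0 // mulr_ile1.
  by move=> i _; exact: hb_01.
by rewrite ger0_norm.
Qed.

Lemma Psif_bc (R : realType) u v : bounded_continuous (@Psif R u v).
Proof.
split.
  apply: cont_sum => i x.
  apply: (@continuous_comp _ _ _ (fun M : 'rV[R]_(u+v).+1 => M ord0 i) (@phi R) x). exact: coord_continuous. exact: phi_cont.
exists ((u + v).+1)%:R => x; rewrite /Psif ger0_norm; last first.
  by apply: sumr_ge0 => i _; have /andP[] := phi_01 (x ord0 i).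
have -> : ((u + v).+1)%:R = \sum_(i < (u + v).+1) (1 : R).
  by rewrite sumr_const card_ord.
by apply: ler_sum => i _; have /andP[] := phi_01 (x ord0 i).
Qed.

Lemma Gf_bool (R : realType) u v b (x : 'rV[R]_(u + v).+1) (xb : int -> bool) :
  (forall i : 'I_(u + v).+1, x ord0 i = (xb (i%:Z - u%:Z))%:R) ->
  Gf b x = (`[< forall k, (k <= u + v)%N -> xb (k%:Z - u%:Z) = b (k%:Z - u%:Z) >])%:R.
Proof.
move=> hx; rewrite /Gf; under eq_bigr do rewrite hx hb_bool.
case: asboolP => [H|H].
  by apply: big1 => i _; rewrite H ?eqxx // -ltnS ltn_ord.
move/existsNP: H => [k /not_implyP [hk hne]].
have hk' : (k < (u + v).+1)%N by rewrite ltnS.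
rewrite (bigD1 (Ordinal hk')) //= .
by move/eqP/negbTE: hne => ->; rewrite mul0r.
Qed.

Lemma window_ord (R : realType) (Tp : Type) (X : int -> Tp -> R) u v w (i : 'I_(u + v).+1) :
  window X u v w ord0 i = X (i%:Z - u%:Z) w.
Proof. by rewrite /window mxE. Qed.

Lemma meas_eqb d (Tp : measurableType d) (f : Tp -> bool) (b : bool) :
  measurable [set w | f w] -> measurable [set w | f w = b].
Proof.
move=> mf; case: b; first exact: mf.
rewrite (_ : [set w | f w = false] = ~` [set w | f w]); first exact: measurableC.
by apply/seteqP; split => w /=; case: (f w).
Qed.

Unset Implicit Arguments.
Section Core.
Context (R : realType) (d : measure_display) (T : measurableType d)
  (P : probability T R) (I : int -> T -> R)
  (dn : nat -> measure_display) (Tn : forall n, measurableType (dn n))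
  (Pn : forall n, probability (Tn n) R) (In : forall n, int -> Tn n -> bool).
Hypothesis mI : forall t, measurable_fun setT (I t).
Hypothesis mIn : forall n t, measurable [set w | In n t w].
Hypothesis cv : cond_fidi_cvg Pn In P I.

Definition EvN n (u v : nat) (b : int -> bool) : set (Tn n) :=
  [set w | forall k, (k <= u + v)%N -> In n (k%:Z - u%:Z) w = b (k%:Z - u%:Z)].
Definition EvI (u v : nat) (b : int -> bool) : set T :=
  [set w | forall k, (k <= u + v)%N -> (I (k%:Z - u%:Z) w == 1) = b (k%:Z - u%:Z)].

Lemma mEvN n u v b : measurable (EvN n u v b).
Proof.
rewrite (_ : EvN n u v b = \bigcap_k [set w | (k <= u + v)%N ->
    In n (k%:Z - u%:Z) w = b (k%:Z - u%:Z)]).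
  apply: bigcapT_measurable => k; case: (leqP k (u + v)) => hk.
    rewrite (_ : [set w | _] = [set w | In n (k%:Z - u%:Z) w = b (k%:Z - u%:Z)]).
      exact: meas_eqb.
    by apply/seteqP; split => w /=; [apply | move=> ->].
  rewrite (_ : [set w | _] = setT); first exact: measurableT.
  by apply/seteqP; split => w //= _; rewrite leqNgt hk.
by apply/seteqP; split => w /= H; [move=> k _ | move=> k]; apply: H.
Qed.

Lemma mIeq1 t : measurable [set w | I t w == 1].
Proof.
have := mI t measurableT [set 1] (measurable_set1 1); rewrite setTI.
by congr measurable; apply/seteqP; split => w /= /eqP.
Qed.

Lemma mEvI u v b : measurable (EvI u v b).
Proof.
rewrite (_ : EvI u v b = \bigcap_k [set w | (k <= u + v)%N ->
    (I (k%:Z - u%:Z) w == 1) = b (k%:Z - u%:Z)]).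
  apply: bigcapT_measurable => k; case: (leqP k (u + v)) => hk.
    rewrite (_ : [set w | _] = [set w | (I (k%:Z - u%:Z) w == 1) = b (k%:Z - u%:Z)]).
      by apply: meas_eqb; exact: mIeq1.
    by apply/seteqP; split => w /=; [apply | move=> ->].
  rewrite (_ : [set w | _] = setT); first exact: measurableT.
  by apply/seteqP; split => w //= _; rewrite leqNgt hk.
by apply/seteqP; split => w /= H; [move=> k _ | move=> k]; apply: H.
Qed.

Lemma Rint_prelim n (u v : nat) (b : int -> bool) : b 0 ->
  Rintegral (Pn n) [set w | In n 0 w]
    (fun w => Gf b (window (fun t w => (In n t w)%:R) u v w))
  = fine (Pn n (EvN n u v b)).
Proof.
move=> b0; rewrite /Rintegral.
have E w : @Gf R u v b (window (fun t w => (In n t w)%:R) u v w) = \1_(EvN n u v b) w.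
  rewrite (@Gf_bool R u v b (window (fun t w => (In n t w)%:R) u v w) (fun t => In n t w)); last by move=> i; rewrite window_ord.
  by rewrite indicE; case: asboolP => H; [rewrite mem_set | rewrite memNset].
under eq_integral => w _ do rewrite E.
rewrite integral_indic; last exact: mEvN.
rewrite setIidl //.
move=> w /= H; have := H u (leq_addr _ _).
by rewrite subrr b0.
exact: mIn.
Qed.

Lemma mPsi (u v : nat) : measurable_fun setT (fun w => @Psif R u v (window I u v w)).
Proof.
rewrite /Psif; under eq_fun => w do under eq_bigr => i _ do rewrite window_ord.
apply: measurable_sum => i; apply: measurableT_comp; last exact: mI.
exact: measurable_realfun.continuous_measurable_fun (@phi_cont R).
Qed.

Lemma mG (u v : nat) (b : int -> bool) : measurable_fun setT (fun w => @Gf R u v b (window I u v w)).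
Proof.
rewrite /Gf; under eq_fun => w do under eq_bigr => i _ do rewrite window_ord.
apply: measurable_prod => i _; apply: measurableT_comp; last exact: mI.
exact: measurable_realfun.continuous_measurable_fun (@hb_cont R _).
Qed.

Lemma psi_lim (u v : nat) : Rintegral P setT (fun w => @Psif R u v (window I u v w)) = 0.
Proof.
have h := cv u v _ (@Psif_bc R u v).
have E n : Rintegral (Pn n) [set w | In n 0 w]
    (fun w => @Psif R u v (window (fun t w => (In n t w)%:R) u v w)) = 0.
  have E0 w : @Psif R u v (window (fun t w => (In n t w)%:R) u v w) = 0.
    by rewrite /Psif big1 // => i _; rewrite window_ord phi_bool.
  rewrite /Rintegral.
  under eq_integral => w _ do rewrite E0.
  by rewrite integral0.
move: h; under eq_fun => n do rewrite E mul0r.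
by move/(cvg_lim (@Rhausdorff R)); rewrite lim_cst.
Qed.

Lemma Psif_ge0 (u v : nat) (x : 'rV[R]_(u + v).+1) : 0 <= Psif x.
Proof. by apply: sumr_ge0 => i _; have /andP[] := phi_01 (x ord0 i). Qed.

Lemma ae_psi (u v : nat) :
  ae_eq P setT (fun w => (@Psif R u v (window I u v w))%:E) (cst 0%E).
Proof.
have mf : measurable_fun setT (EFin \o (fun w => @Psif R u v (window I u v w))).
  exact: ((measurable_EFinP _ _).2 (mPsi u v)).
apply/(ae_eq_integral_abs P measurableT mf).
under eq_integral => w _ do rewrite gee0_abs ?lee_fin ?Psif_ge0 //.
have h := psi_lim u v; move: h; rewrite /Rintegral.
set x := (X in fine X) => hx.
have x0 : (0 <= x)%E by apply: integral_ge0 => w _; rewrite lee_fin Psif_ge0.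
have xM : (x <= ((u + v).+1)%:R%:E)%E.
  apply: (@le_trans _ _ (\int[P]_(w in setT) cst (((u + v).+1)%:R)%:E w)%E).
    apply: ge0_le_integral => //; first by move=> w _; rewrite lee_fin Psif_ge0.
    - move=> w _; rewrite lee_fin.
      have [_ [M HM]] := @Psif_bc R u v.
      rewrite /Psif -[X in X <= _]ger0_norm; last first.
        by apply: sumr_ge0 => i _; have /andP[] := phi_01 (window I u v w ord0 i).
      have -> : ((u + v).+1)%:R = \sum_(i < (u + v).+1) (1 : R).
        by rewrite sumr_const card_ord.
      rewrite ger0_norm; last by apply: sumr_ge0 => i _; have /andP[] := phi_01 (window I u v w ord0 i).
      by apply: ler_sum => i _; have /andP[] := phi_01 (window I u v w ord0 i).
  rewrite integral_cst //; set p := (X in (_ * X)%E).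
  have -> : p = 1%E by exact: probability_setT.
  by rewrite mule1.
have xf : x \is a fin_num by rewrite ge0_fin_numE // (le_lt_trans xM) ?ltry.
by rewrite [LHS](_ : _ = x) // -(fineK xf) hx.
Qed.

Lemma G_limit (u v : nat) (b : int -> bool) :
  Rintegral P setT (fun w => @Gf R u v b (window I u v w)) = fine (P (EvI u v b)).
Proof.
rewrite /Rintegral; congr fine.
rewrite -[in RHS](setIT (EvI u v b)) -integral_indic; last exact: mEvI.
apply: ae_eq_integral => //.
- exact: ((measurable_EFinP _ _).2 (mG u v b)).
- apply/measurable_EFinP; exact: measurable_indic (mEvI u v b).
have := ae_psi u v; apply: filterS => w h _.
have {}h := h Logic.I; move: h => /= /eqP; rewrite eqe => /eqP h.
have hphi (i : 'I_(u + v).+1) : phi (I (i%:Z - u%:Z) w) = 0.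
  move: h; rewrite /Psif => /psumr_eq0P h.
  by rewrite -window_ord h // => j _; have /andP[] := phi_01 (window I u v w ord0 j).
congr EFin.
rewrite (@Gf_bool R u v b (window I u v w) (fun t => I t w == 1)); last first.
  move=> i; rewrite window_ord.
  by case: (phi0 (hphi i)) => ->; rewrite ?eqxx // eq_sym oner_eq0.
by rewrite indicE; case: asboolP => H; [rewrite mem_set | rewrite memNset].
exact: measurableT.
Qed.

Lemma core (u v : nat) (b : int -> bool) : b 0 ->
  (fun n => fine (Pn n (EvN n u v b)) / fine (Pn n [set w | In n 0 w]))
    @ \oo --> fine (P (EvI u v b)).
Proof.
move=> b0; have h := cv u v _ (@Gf_bc R u v b).
rewrite G_limit in h; move: h.
by under eq_fun => n do rewrite Rint_prelim //.
Qed.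

End Core.

From mathcomp Require Import zify.

Lemma eqb_asbool (c : bool) (Q : Prop) : (c <-> Q) -> c = `[< Q >].
Proof. by move=> h; apply/idP/asboolP => /h. Qed.

Lemma stat_shift {dn : measure_display} {Tn : measurableType dn} {R : realType}
  {Pn : probability Tn R} {In : int -> Tn -> bool} {u v u' v' : nat}
  {b : int -> bool} {a : int} :
  stationary01 Pn In -> (u + v = u' + v')%N -> u'%:Z = u%:Z + a ->
  Pn [set w | forall k, (k <= u + v)%N -> In (k%:Z - u%:Z) w = b (k%:Z - u%:Z)] =
  Pn [set w | forall k, (k <= u' + v')%N ->
        In (k%:Z - u'%:Z) w = b (a + (k%:Z - u'%:Z))].
Proof.
move=> st huv hu.
have e1 k : k%:Z - u'%:Z + a = k%:Z - u%:Z by rewrite hu; lia.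
have e2 k : a + (k%:Z - u'%:Z) = k%:Z - u%:Z by rewrite hu; lia.
set tb := [seq (k%:Z - u'%:Z, b (a + (k%:Z - u'%:Z))) | k <- iota 0 (u' + v').+1].
transitivity (Pn [set w | all (fun p => In (p.1 + a) w == p.2) tb]).
  congr (Pn _); apply/seteqP; split => w; rewrite /mkset.
    move=> H; rewrite all_map; apply/allP => k; rewrite mem_iota /= => hk.
    by rewrite e1 e2 H // huv; lia.
  rewrite all_map => /allP H k hk.
  have hk' : k \in iota 0 (u' + v').+1 by rewrite mem_iota; lia.
  by move: (H k hk') => /= /eqP; rewrite e1 e2.
rewrite st; congr (Pn _); apply/seteqP; split => w; rewrite /mkset.
  rewrite all_map => /allP H k hk.
  have hk' : k \in iota 0 (u' + v').+1 by rewrite mem_iota; lia.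
  by move: (H k hk') => /= /eqP.
move=> H; rewrite all_map; apply/allP => k; rewrite mem_iota /= => hk.
by rewrite H //; lia.
Qed.
Lemma Cset_EvI (R : realType) d (T : measurableType d) (I : int -> T -> R)
  (B : set int) (t1 t2 : int) : t1 <= 0 <= t2 ->
  [set w | Cset I w `&` zint t1 t2 = B `&` zint t1 t2]
  = EvI R d T I (absz t1) (absz t2) (fun t => `[< B t >]).
Proof.
move=> /andP[h1 h2].
have hu : ((absz t1)%:Z = - t1) by lia.
have hv : ((absz t2)%:Z = t2) by lia.
apply/seteqP; split => w; rewrite /EvI /mkset.
  move=> H k hk; apply: eqb_asbool.
  have ht : zint t1 t2 (k%:Z - (absz t1)%:Z) by rewrite /zint /=; lia.
  have := congr1 (fun S => S (k%:Z - (absz t1)%:Z)) H => /= E.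
  split.
    move=> /eqP h; have : Cset I w (k%:Z - (absz t1)%:Z) /\ zint t1 t2 (k%:Z - (absz t1)%:Z).
      by split.
    by rewrite E => -[].
  move=> hb; have : B (k%:Z - (absz t1)%:Z) /\ zint t1 t2 (k%:Z - (absz t1)%:Z) by split.
  by rewrite -E => -[/= ->].
move=> H; apply/seteqP; split => t [ht zt]; split => //.
  have hk : (absz (t - t1) <= absz t1 + absz t2)%N by move: zt; rewrite /zint /=; lia.
  have E := H _ hk.
  have e : (absz (t - t1))%:Z - (absz t1)%:Z = t by move: zt; rewrite /zint /=; lia.
  rewrite e in E; move: E; rewrite /Cset /= in ht; rewrite ht eqxx => /esym/asboolP; exact.
have hk : (absz (t - t1) <= absz t1 + absz t2)%N by move: zt; rewrite /zint /=; lia.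
have E := H _ hk.
have e : (absz (t - t1))%:Z - (absz t1)%:Z = t by move: zt; rewrite /zint /=; lia.
rewrite e in E; rewrite /Cset /=; apply/eqP; rewrite E; exact/asboolP.
Qed.
Lemma partb (R : realType) (d : measure_display) (T : measurableType d)
  (P : probability T R) (I : int -> T -> R)
  (dn : nat -> measure_display) (Tn : forall n, measurableType (dn n))
  (Pn : forall n, probability (Tn n) R) (In : forall n, int -> Tn n -> bool) :
  (forall t, measurable_fun setT (I t)) ->
  (forall n t, measurable [set w | In n t w]) ->
  (forall n, stationary01 (Pn n) (In n)) ->
  cond_fidi_cvg Pn In P I ->
  (forall (A : set int) (t1 t2 : int), A 0 -> t1 <= 0 <= t2 ->
     forall a, (A `&` zint t1 t2) a ->
       P [set w | Cset I w `&` zint t1 t2 = A `&` zint t1 t2]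
       = P [set w | Cset I w `&` zint (t1 - a) (t2 - a)
                    = shiftset A a `&` zint (t1 - a) (t2 - a)]).
Proof.
move=> mI mIn st cv A t1 t2 A0 ht a [Aa za].
have ht' : t1 - a <= 0 <= t2 - a by move: ht za; rewrite /zint /=; lia.
rewrite (@Cset_EvI R d T I A t1 t2 ht) (@Cset_EvI R d T I (shiftset A a) _ _ ht').
have h1 := core R d T P I dn Tn Pn In mI mIn cv (absz t1) (absz t2) (fun t => `[< A t >]) (asboolT A0).
have b0 : `[< shiftset A a 0 >] by apply/asboolP; rewrite /shiftset /= addr0.
have h2 := core R d T P I dn Tn Pn In mI mIn cv (absz (t1 - a)) (absz (t2 - a)) (fun t => `[< shiftset A a t >]) b0.
have E : (fun n => fine (Pn n (EvN dn Tn In n (absz t1) (absz t2) (fun t => `[< A t >])))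
     / fine (Pn n [set w | In n 0 w])) =
   (fun n => fine (Pn n (EvN dn Tn In n (absz (t1 - a)) (absz (t2 - a))
        (fun t => `[< shiftset A a t >]))) / fine (Pn n [set w | In n 0 w])).
  apply/funext => n; congr (fine _ / _).
  apply: (stat_shift (st n)); move: ht za; rewrite /zint /=; lia.
rewrite E in h1.
have L1 := cvg_lim (@Rhausdorff R) h1.
have L2 := cvg_lim (@Rhausdorff R) h2.
have F : fine (P (EvI R d T I (absz t1) (absz t2) (fun t => `[< A t >]))) =
         fine (P (EvI R d T I (absz (t1 - a)) (absz (t2 - a)) (fun t => `[< shiftset A a t >]))).
  by rewrite -L1 -L2.
have f1 := fin_num_measure P _ (mEvI R d T I mI (absz t1) (absz t2) (fun t => `[< A t >])).
have f2 := fin_num_measure P _ (mEvI R d T I mI (absz (t1 - a)) (absz (t2 - a)) (fun t => `[< shiftset A a t >])).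
by rewrite -(fineK f1) -(fineK f2) F.
Qed.

Lemma setI_restrict (X Y Z Z' : set int) : Z' `<=` Z ->
  X `&` Z = Y `&` Z -> X `&` Z' = Y `&` Z'.
Proof.
move=> sZ H; apply/seteqP; split => t [xt zt]; split => //.
  have : (X `&` Z) t by split => //; apply: sZ.
  by rewrite H => -[].
have : (Y `&` Z) t by split => //; apply: sZ.
by rewrite -H => -[].
Qed.

Lemma bigcap_Cset (R : realType) d (T : measurableType d) (I : int -> T -> R)
  (B : set int) (f g : nat -> int) :
  (forall t, exists k, f k <= t <= g k) ->
  \bigcap_k [set w | Cset I w `&` zint (f k) (g k) = B `&` zint (f k) (g k)]
  = [set w | Cset I w = B].
Proof.
move=> cov; apply/seteqP; split => w /=.
  move=> H; apply/seteqP; split => t ht; have [k hk] := cov t;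
    have := H k Logic.I => /= E.
    have : (Cset I w `&` zint (f k) (g k)) t by [].
    by rewrite E => -[].
  have : (B `&` zint (f k) (g k)) t by [].
  by rewrite -E => -[].
by move=> E k _; rewrite /mkset -E.
Qed.

Lemma noninc_Cset (R : realType) d (T : measurableType d) (I : int -> T -> R)
  (B : set int) (f g : nat -> int) :
  (forall n m, (n <= m)%N -> f m <= f n /\ g n <= g m) ->
  nonincreasing_seq (fun k => [set w | Cset I w `&` zint (f k) (g k) = B `&` zint (f k) (g k)]).
Proof.
move=> mon n m nm; apply/subsetPset => w /= H; apply: setI_restrict H.
have [h1 h2] := mon n m nm.
move=> t; rewrite /zint /= => /andP[a1 a2]; apply/andP; split.
  exact: le_trans h1 a1.
exact: le_trans a2 h2.
Qed.

Theorem corollary2p2 (R : realType) (d : measure_display) (T : measurableType d)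
  (P : probability T R) (I : int -> T -> R)
  (dn : nat -> measure_display) (Tn : forall n, measurableType (dn n))
  (Pn : forall n, probability (Tn n) R) (In : forall n, int -> Tn n -> bool) :
  (forall t, measurable_fun setT (I t)) ->
  (forall n t, measurable [set w | In n t w]) ->
  (forall n, stationary01 (Pn n) (In n)) ->
  (forall n, (0 < Pn n [set w | In n 0%R w])%E) ->
  cond_fidi_cvg Pn In P I ->
  (forall A : set int, A 0 -> forall a, A a ->
     P [set w | Cset I w = A] = P [set w | Cset I w = shiftset A a])
  /\
  (forall (A : set int) (t1 t2 : int), A 0 -> t1 <= 0 <= t2 ->
     forall a, (A `&` zint t1 t2) a ->
       P [set w | Cset I w `&` zint t1 t2 = A `&` zint t1 t2]
       = P [set w | Cset I w `&` zint (t1 - a) (t2 - a)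
                    = shiftset A a `&` zint (t1 - a) (t2 - a)]).
Proof.
move=> mI mIn st _ cv.
have pb := partb R d T P I dn Tn Pn In mI mIn st cv.
split; last exact: pb.
move=> A A0 a Aa.
pose N k : int := ((k + absz a)%N)%:Z.
pose F k := [set w | Cset I w `&` zint (- N k) (N k) = A `&` zint (- N k) (N k)].
pose G k := [set w | Cset I w `&` zint (- N k - a) (N k - a)
                     = shiftset A a `&` zint (- N k - a) (N k - a)].
have mF k : measurable (F k).
  rewrite /F (@Cset_EvI R d T I A (- N k) (N k)); first exact: mEvI.
  rewrite /N; lia.
have mG k : measurable (G k).
  rewrite /G (@Cset_EvI R d T I (shiftset A a) (- N k - a) (N k - a)); first exact: mEvI.
  rewrite /N; lia.
have FG : (fun k => P (F k)) = (fun k => P (G k)).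
  apply/funext => k; apply: pb => //; first by rewrite /N; lia.
  by split => //; rewrite /zint /N /=; lia.
have cF : \bigcap_k F k = [set w | Cset I w = A].
  apply: bigcap_Cset => t; exists (absz t); rewrite /N; lia.
have cG : \bigcap_k G k = [set w | Cset I w = shiftset A a].
  apply: bigcap_Cset => t; exists (absz (t + a)); rewrite /N; lia.
have fin0 (S : set T) : measurable S -> (P S < +oo)%E.
  move=> mS; rewrite ltey; have := fin_num_measure P _ mS.
  by rewrite fin_numE => /andP[].
have hF := @nonincreasing_cvg_mu _ _ _ P F (fin0 _ (mF 0%N)) mF (bigcapT_measurable mF)
  (noninc_Cset R d T I A (fun k => - N k) N (fun n m nm => ltac:(rewrite /N; split; lia))).
have hG := @nonincreasing_cvg_mu _ _ _ P G (fin0 _ (mG 0%N)) mG (bigcapT_measurable mG)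
  (noninc_Cset R d T I (shiftset A a) (fun k => - N k - a) (fun k => N k - a)
     (fun n m nm => ltac:(rewrite /N; split; lia))).
rewrite cF in hF; rewrite cG in hG.
have L1 := cvg_lim (@ereal_hausdorff R) hF.
have L2 := cvg_lim (@ereal_hausdorff R) hG.
rewrite -L1 -L2 (_ : P \o F = P \o G) //.
Qed.
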